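(* For all $\mathbf u\in C^3(\overline{\mathbb{B}^3})\times C^2(\overline{\mathbb{B}^3})$, \[ \operatorname{Re}(\tilde{\mathbf L}\mathbf u|\mathbf u)_3\le-\tfrac2{p-1}(\mathbf u|\mathbf u)_3. \]
   Context: Fix $p>3$. $\mathbb{B}^3$ is the open unit ball in $\mathbb{R}^3$, $\mathbb{S}^2=\partial\mathbb{B}^3$ with surface measure $\sigma$; repeated latin indices are summed from 1 to 3; functions are complex-valued. For $\mathbf u,\mathbf v\in C^2(\overline{\mathbb{B}^3})\times C^1(\overline{\mathbb{B}^3})$, $(\mathbf u|\mathbf v)_3=\int_{\mathbb{S}^2}[\omega^j\partial_ju_1+u_1+u_2](\omega)d\sigma(\omega)\int_{\mathbb{S}^2}\overline{[\omega^j\partial_jv_1+v_1+v_2](\omega)}d\sigma(\omega)$. For $\mathbf u\in C^3(\overline{\mathbb{B}^3})\times C^2(\overline{\mathbb{B}^3})$, $\tilde{\mathbf L}\mathbf u(\xi)=\big(-\xi^j\partial_ju_1(\xi)-\frac2{p-1}u_1(\xi)+u_2(\xi),\ \partial^j\partial_ju_1(\xi)-\xi^j\partial_ju_2(\xi)-\frac{p+1}{p-1}u_2(\xi)\big)$. *)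

(* Defs.v *)
From Stdlib Require Import Reals.
From Coquelicot Require Import Coquelicot.
Open Scope R_scope.

(* Points of R^3, written ((x1, x2), x3). Coordinates indexed by j = 0,1,2
   (standing for the paper's indices 1,2,3). *)
Definition R3 := (R * R * R)%type.

Definition coord (x : R3) (j : nat) : R :=
  match j with
  | O => fst (fst x)
  | 1%nat => snd (fst x)
  | _ => snd x
  end.

Definition shift (x : R3) (j : nat) (t : R) : R3 :=
  match j with
  | O => ((fst (fst x) + t, snd (fst x)), snd x)
  | 1%nat => ((fst (fst x), snd (fst x) + t), snd x)
  | _ => ((fst (fst x), snd (fst x)), snd x + t)
  end.

Definition ex_partial (f : R3 -> C) (j : nat) (x : R3) : Prop :=
  ex_derive (fun t => Re (f (shift x j t))) 0 /\
  ex_derive (fun t => Im (f (shift x j t))) 0.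

Definition partial (f : R3 -> C) (j : nat) (x : R3) : C :=
  (Derive (fun t => Re (f (shift x j t))) 0,
   Derive (fun t => Im (f (shift x j t))) 0).

Fixpoint Ck (k : nat) (U : R3 -> Prop) (f : R3 -> C) : Prop :=
  (forall x, U x -> continuous f x) /\
  match k with
  | O => True
  | S k' => (forall j x, (j < 3)%nat -> U x -> ex_partial f j x) /\
            (forall j, (j < 3)%nat -> Ck k' U (partial f j))
  end.

Definition cball (x : R3) : Prop :=
  coord x 0 ^ 2 + coord x 1 ^ 2 + coord x 2 ^ 2 <= 1.

(* C^k(closed unit ball): C^k on some open neighbourhood of the closed ball *)
Definition Ck_cball (k : nat) (f : R3 -> C) : Prop :=
  exists U : R3 -> Prop, open U /\ (forall x, cball x -> U x) /\ Ck k U f.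

Definition sum3 (g : nat -> C) : C := Cplus (Cplus (g 0%nat) (g 1%nat)) (g 2%nat).

(* Integral over S^2 with respect to the surface measure, via spherical
   coordinates: d sigma = sin(theta) d theta d phi. *)
Definition sph (th ph : R) : R3 :=
  ((sin th * cos ph, sin th * sin ph), cos th).

Definition sphere_int (g : R3 -> C) : C :=
  @RInt C_R_CompleteNormedModule
    (fun th => @RInt C_R_CompleteNormedModule
                 (fun ph => Cmult (RtoC (sin th)) (g (sph th ph))) 0 (2 * PI)) 0 PI.

Definition pair3 := ((R3 -> C) * (R3 -> C))%type.

Definition bdry (u : pair3) (w : R3) : C :=
  Cplus (Cplus (sum3 (fun j => Cmult (RtoC (coord w j)) (partial (fst u) j w)))
               (fst u w)) (snd u w).

Definition ip3 (u v : pair3) : C :=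
  Cmult (sphere_int (bdry u)) (Cconj (sphere_int (bdry v))).

Definition Ltilde (p : R) (u : pair3) : pair3 :=
  (fun xi =>
     Cplus (Cminus (Copp (sum3 (fun j => Cmult (RtoC (coord xi j)) (partial (fst u) j xi))))
                   (Cmult (RtoC (2 / (p - 1))) (fst u xi)))
           (snd u xi),
   fun xi =>
     Cminus (Cminus (sum3 (fun j => partial (partial (fst u) j) j xi))
                    (sum3 (fun j => Cmult (RtoC (coord xi j)) (partial (snd u) j xi))))
            (Cmult (RtoC ((p + 1) / (p - 1))) (snd u xi))).

(* Main.v *)
Require Import Defs.
From Stdlib Require Import Reals.
From Stdlib Require Import Lra Lia Nsatz FunctionalExtensionality.
From Coquelicot Require Import Coquelicot.
Open Scope R_scope.

Lemma ballR (a b e : R) : ball a e b <-> Rabs (b - a) < e.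
Proof. unfold ball; simpl; unfold AbsRing_ball, abs, minus, plus, opp; simpl. tauto. Qed.

Lemma ball3 (x0 x1 x2 y0 y1 y2 e : R) :
  ball (((x0, x1), x2) : R3) e ((y0, y1), y2) <->
  Rabs (y0 - x0) < e /\ Rabs (y1 - x1) < e /\ Rabs (y2 - x2) < e.
Proof.
  change ((ball x0 e y0 /\ ball x1 e y1) /\ ball x2 e y2 <->
    Rabs (y0 - x0) < e /\ Rabs (y1 - x1) < e /\ Rabs (y2 - x2) < e).
  rewrite !ballR. tauto.
Qed.

Lemma norm3 (y0 y1 y2 x0 x1 x2 : R) :
  Rabs (y0 - x0) <= norm (minus (((y0, y1), y2) : R3) ((x0, x1), x2)) /\
  Rabs (y1 - x1) <= norm (minus (((y0, y1), y2) : R3) ((x0, x1), x2)) /\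
  Rabs (y2 - x2) <= norm (minus (((y0, y1), y2) : R3) ((x0, x1), x2)).
Proof.
  set (z := minus _ _).
  pose proof (norm_le_prod_norm_1 z) as H1.
  pose proof (norm_le_prod_norm_2 z) as H2.
  pose proof (norm_le_prod_norm_1 (fst z)) as H3.
  pose proof (norm_le_prod_norm_2 (fst z)) as H4.
  simpl in H1, H2, H3, H4.
  unfold z, minus, plus, opp in *; simpl in *. unfold norm in *; simpl in *. unfold abs in *; simpl in *.
  unfold Rminus. repeat split; lra.
Qed.

Lemma seg_bound (a b s : R) : Rmin a b <= s <= Rmax a b -> Rabs (s - a) <= Rabs (b - a).
Proof.
  intros [H1 H2]. unfold Rmin, Rmax in *. destruct (Rle_dec a b);
  unfold Rabs; repeat destruct Rcase_abs; lra.
Qed.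

Lemma mvt_bound (f df : R -> R) (a b eps c0 : R) :
  (forall s, Rmin a b <= s <= Rmax a b -> is_derive f s (df s)) ->
  (forall s, Rmin a b <= s <= Rmax a b -> Rabs (df s - c0) <= eps) ->
  Rabs (f b - f a - c0 * (b - a)) <= eps * Rabs (b - a).
Proof.
  intros Hd Hb.
  destruct (MVT_gen f a b df) as [c [Hc Heq]].
  - intros s Hs. apply Hd. lra.
  - intros s Hs. apply continuity_pt_filterlim.
    apply (ex_derive_continuous (V:=R_NormedModule)).
    eexists. apply Hd. exact Hs.
  - rewrite Heq. replace (df c * (b - a) - c0 * (b - a)) with ((df c - c0) * (b - a)) by ring.
    rewrite Rabs_mult. apply Rmult_le_compat_r. apply Rabs_pos. apply Hb. exact Hc.
Qed.

Lemma cont_ball (d : R3 -> R) (x : R3) (e : posreal) :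
  continuous d x -> exists del : posreal, forall y, ball x del y -> Rabs (d y - d x) < e.
Proof.
  intros H. apply filterlim_locally with (eps := e) in H.
  destruct H as [del Hd]. exists del. intros y Hy. apply ballR. apply Hd. exact Hy.
Qed.

Lemma lin3 (a0 a1 a2 : R) :
  is_linear (fun h : R3 => fst (fst h) * a0 + snd (fst h) * a1 + snd h * a2 : R_NormedModule).
Proof.
  split.
  - intros [[x0 x1] x2] [[y0 y1] y2]. unfold plus; simpl. unfold plus; simpl. ring.
  - intros k [[x0 x1] x2]. unfold scal; simpl. unfold scal, mult; simpl. unfold mult; simpl. ring.
  - exists (Rabs a0 + Rabs a1 + Rabs a2 + 1). split.
    + pose proof (Rabs_pos a0); pose proof (Rabs_pos a1); pose proof (Rabs_pos a2); lra.
    + intros h.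
      pose proof (norm_le_prod_norm_1 h) as H1.
      pose proof (norm_le_prod_norm_2 h) as N2.
      pose proof (norm_le_prod_norm_1 (fst h)) as N0.
      pose proof (norm_le_prod_norm_2 (fst h)) as N1.
      set (n := norm h) in *.
      change (norm (fst (fst h) * a0 + snd (fst h) * a1 + snd h * a2)) with (Rabs (fst (fst h) * a0 + snd (fst h) * a1 + snd h * a2)).
      change (norm (fst (fst h))) with (Rabs (fst (fst h))) in N0.
      change (norm (snd (fst h))) with (Rabs (snd (fst h))) in N1.
      change (norm (snd h)) with (Rabs (snd h)) in N2.
      assert (N0' : Rabs (fst (fst h)) <= n) by lra.
      assert (N1' : Rabs (snd (fst h)) <= n) by lra.
      assert (0 <= n) by (eapply Rle_trans; [apply Rabs_pos| exact N2]).
      eapply Rle_trans. apply Rabs_triang. eapply Rle_trans. apply Rplus_le_compat_r. apply Rabs_triang.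
      rewrite !Rabs_mult.
      pose proof (Rmult_le_compat_r (Rabs a0) _ _ (Rabs_pos a0) N0').
      pose proof (Rmult_le_compat_r (Rabs a1) _ _ (Rabs_pos a1) N1').
      pose proof (Rmult_le_compat_r (Rabs a2) _ _ (Rabs_pos a2) N2).
      nra.
Qed.

Lemma frechet3 (v d0 d1 d2 : R3 -> R) (x : R3) (del : posreal) :
 (forall y, ball x del y -> is_derive (fun s => v ((s, snd (fst y)), snd y)) (fst (fst y)) (d0 y)) ->
 (forall y, ball x del y -> is_derive (fun s => v ((fst (fst y), s), snd y)) (snd (fst y)) (d1 y)) ->
 (forall y, ball x del y -> is_derive (fun s => v ((fst (fst y), snd (fst y)), s)) (snd y) (d2 y)) ->
 continuous d0 x -> continuous d1 x -> continuous d2 x ->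
 filterdiff (V := R_NormedModule) v (locally x)
   (fun h => fst (fst h) * d0 x + snd (fst h) * d1 x + snd h * d2 x).
Proof.
  intros H0 H1 H2 C0 C1 C2. split. apply lin3.
  intros x' Hx'.
  pose proof (is_filter_lim_locally_unique (V := prod_NormedModule R_AbsRing (prod_NormedModule R_AbsRing R_NormedModule R_NormedModule) R_NormedModule) x x' Hx') as Ex. subst x'.
  intros eps.
  assert (He3 : 0 < eps / 3) by (destruct eps; simpl; lra).
  destruct (cont_ball d0 x (mkposreal _ He3) C0) as [e0 E0].
  destruct (cont_ball d1 x (mkposreal _ He3) C1) as [e1 E1].
  destruct (cont_ball d2 x (mkposreal _ He3) C2) as [e2 E2].
  simpl in E0, E1, E2.
  assert (Hm : 0 < Rmin del (Rmin e0 (Rmin e1 e2))).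
  { destruct del, e0, e1, e2; simpl. repeat apply Rmin_pos; assumption. }
  exists (mkposreal _ Hm). intros y Hy. simpl in Hy.
  destruct x as [[x0 x1] x2]. destruct y as [[y0 y1] y2].
  apply ball3 in Hy. destruct Hy as [B0 [B1 B2]].
  pose proof (Rmin_l del (Rmin e0 (Rmin e1 e2))) as M1.
  pose proof (Rmin_r del (Rmin e0 (Rmin e1 e2))) as M2.
  pose proof (Rmin_l e0 (Rmin e1 e2)) as M3.
  pose proof (Rmin_r e0 (Rmin e1 e2)) as M4.
  pose proof (Rmin_l e1 e2) as M5. pose proof (Rmin_r e1 e2) as M6.
  set (m := Rmin del (Rmin e0 (Rmin e1 e2))) in *.
  destruct (norm3 y0 y1 y2 x0 x1 x2) as [N0 [N1 N2]].
  set (n := norm _) in N0, N1, N2.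
  change (norm (minus (minus (v (y0, y1, y2)) (v (x0, x1, x2)))
     ((fun h : R3 => fst (fst h) * d0 (x0, x1, x2) + snd (fst h) * d1 (x0, x1, x2) +
        snd h * d2 (x0, x1, x2)) (minus (y0, y1, y2) (x0, x1, x2)))) <= eps * n).
  replace (norm _) with (Rabs ((v ((y0, y1), y2) - v ((x0, y1), y2) - d0 (x0,x1,x2) * (y0 - x0))
     + (v ((x0, y1), y2) - v ((x0, x1), y2) - d1 (x0,x1,x2) * (y1 - x1))
     + (v ((x0, x1), y2) - v ((x0, x1), x2) - d2 (x0,x1,x2) * (y2 - x2)))).
  2:{ change norm with (fun r : R => Rabs r). simpl. f_equal.
      unfold minus, plus, opp; simpl. unfold plus, opp; simpl. ring. }
  assert (A0 : Rabs (v ((y0, y1), y2) - v ((x0, y1), y2) - d0 (x0,x1,x2) * (y0 - x0)) <= eps/3 * Rabs (y0 - x0)).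
  { apply (mvt_bound (fun s => v ((s, y1), y2)) (fun s => d0 ((s, y1), y2))).
    - intros s Hs. pose proof (seg_bound _ _ _ Hs).
      apply (H0 ((s, y1), y2)). apply ball3. repeat split; lra.
    - intros s Hs. pose proof (seg_bound _ _ _ Hs). left. apply E0. apply ball3. repeat split; lra. }
  assert (A1 : Rabs (v ((x0, y1), y2) - v ((x0, x1), y2) - d1 (x0,x1,x2) * (y1 - x1)) <= eps/3 * Rabs (y1 - x1)).
  { apply (mvt_bound (fun s => v ((x0, s), y2)) (fun s => d1 ((x0, s), y2))).
    - intros s Hs. pose proof (seg_bound _ _ _ Hs).
      apply (H1 ((x0, s), y2)). apply ball3. rewrite Rminus_diag, Rabs_R0. repeat split; try lra; apply cond_pos.
    - intros s Hs. pose proof (seg_bound _ _ _ Hs). left. apply E1. apply ball3.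
      rewrite Rminus_diag, Rabs_R0. repeat split; try lra; apply cond_pos. }
  assert (A2 : Rabs (v ((x0, x1), y2) - v ((x0, x1), x2) - d2 (x0,x1,x2) * (y2 - x2)) <= eps/3 * Rabs (y2 - x2)).
  { apply (mvt_bound (fun s => v ((x0, x1), s)) (fun s => d2 ((x0, x1), s))).
    - intros s Hs. pose proof (seg_bound _ _ _ Hs).
      apply (H2 ((x0, x1), s)). apply ball3. rewrite !Rminus_diag, Rabs_R0. repeat split; try lra; apply cond_pos.
    - intros s Hs. pose proof (seg_bound _ _ _ Hs). left. apply E2. apply ball3.
      rewrite !Rminus_diag, Rabs_R0. repeat split; try lra; apply cond_pos. }
  eapply Rle_trans. apply Rabs_triang. eapply Rle_trans. apply Rplus_le_compat_r. apply Rabs_triang.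
  assert (0 < eps) by (destruct eps; simpl; lra).
  assert (eps / 3 * Rabs (y0 - x0) <= eps / 3 * n) by (apply Rmult_le_compat_l; lra).
  assert (eps / 3 * Rabs (y1 - x1) <= eps / 3 * n) by (apply Rmult_le_compat_l; lra).
  assert (eps / 3 * Rabs (y2 - x2) <= eps / 3 * n) by (apply Rmult_le_compat_l; lra).
  lra.
Qed.

Lemma is_derive_pair {U V : NormedModule R_AbsRing} (f : R -> U) (g : R -> V) t l1 l2 :
  is_derive f t l1 -> is_derive g t l2 ->
  is_derive (V := prod_NormedModule R_AbsRing U V) (fun t => (f t, g t)) t (l1, l2).
Proof.
  intros Hf Hg. unfold is_derive.
  apply (filterdiff_comp'_2 f g (fun u w => (u, w)) t (fun y => scal y l1) (fun y => scal y l2) (fun u w => (u, w)) Hf Hg).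
  apply filterdiff_ext_lin with (l1 := fun y => y).
  2: intros [u w]; reflexivity.
  eapply filterdiff_ext. 2: apply filterdiff_id.
  intros [u w]. reflexivity.
Qed.

Lemma chain3 (v d0 d1 d2 : R3 -> R) (x : R3) (del : posreal) (a b c : R -> R) (t0 a' b' c' : R) :
 (forall y, ball x del y -> is_derive (fun s => v ((s, snd (fst y)), snd y)) (fst (fst y)) (d0 y)) ->
 (forall y, ball x del y -> is_derive (fun s => v ((fst (fst y), s), snd y)) (snd (fst y)) (d1 y)) ->
 (forall y, ball x del y -> is_derive (fun s => v ((fst (fst y), snd (fst y)), s)) (snd y) (d2 y)) ->
 continuous d0 x -> continuous d1 x -> continuous d2 x ->
 x = ((a t0, b t0), c t0) ->
 is_derive a t0 a' -> is_derive b t0 b' -> is_derive c t0 c' ->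
 is_derive (fun t => v ((a t, b t), c t)) t0 (a' * d0 x + b' * d1 x + c' * d2 x).
Proof.
  intros H0 H1 H2 C0 C1 C2 Ex Ha Hb Hc.
  pose proof (frechet3 v d0 d1 d2 x del H0 H1 H2 C0 C1 C2) as F.
  pose proof (is_derive_pair _ _ _ _ _ (is_derive_pair _ _ _ _ _ Ha Hb) Hc) as G.
  unfold is_derive in *.
  rewrite Ex in F.
  pose proof (filterdiff_comp' _ _ _ _ _ G F) as K.
  eapply filterdiff_ext_lin. exact K.
  intros y. simpl. unfold scal; simpl. unfold mult; simpl. rewrite Ex. ring.
Qed.

Definition pR (v : R3 -> R) (j : nat) (x : R3) : R := Derive (fun t => v (shift x j t)) 0.

Definition D1 (U : R3 -> Prop) (v : R3 -> R) : Prop :=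
  (forall j x, (j < 3)%nat -> U x -> ex_derive (fun t => v (shift x j t)) 0) /\
  (forall j x, (j < 3)%nat -> U x -> continuous (pR v j) x).

Lemma shift_deriv (v : R3 -> R) (y : R3) (j : nat) (g : R -> R) (y0 : R) :
  ex_derive (fun t => v (shift y j t)) 0 ->
  (forall t, v (shift y j t) = g (y0 + t)) ->
  is_derive g y0 (pR v j y).
Proof.
  intros He Hg. apply Derive_correct in He.
  unfold pR.
  apply is_derive_ext with (f := fun s => v (shift y j (s - y0))).
  { intros s. rewrite Hg. f_equal. ring. }
  set (D := Derive _ 0) in *.
  replace D with (scal 1 D) by (unfold scal; simpl; unfold mult; simpl; ring).
  apply (is_derive_comp (fun t => v (shift y j t)) (fun s => s - y0)).
  - replace (y0 - y0) with 0 by ring. exact He.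
  - auto_derive; auto; ring.
Qed.

Lemma chainU (U : R3 -> Prop) (v : R3 -> R) (a b c : R -> R) (t0 a' b' c' : R) :
  open U -> D1 U v -> U ((a t0, b t0), c t0) ->
  is_derive a t0 a' -> is_derive b t0 b' -> is_derive c t0 c' ->
  is_derive (fun t => v ((a t, b t), c t)) t0
    (a' * pR v 0 ((a t0, b t0), c t0) + b' * pR v 1 ((a t0, b t0), c t0) + c' * pR v 2 ((a t0, b t0), c t0)).
Proof.
  intros HU [He Hc] Hx Ha Hb Hcc.
  destruct (HU _ Hx) as [del Hdel].
  apply (chain3 v (pR v 0) (pR v 1) (pR v 2) _ del); try assumption; try reflexivity.
  - intros [[y0 y1] y2] Hy. simpl. apply shift_deriv with (v := v) (j := 0%nat). apply He. lia. apply Hdel. exact Hy.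
    intros t. reflexivity.
  - intros [[y0 y1] y2] Hy. simpl. apply shift_deriv with (v := v) (j := 1%nat). apply He. lia. apply Hdel. exact Hy.
    intros t. reflexivity.
  - intros [[y0 y1] y2] Hy. simpl. apply shift_deriv with (v := v) (j := 2%nat). apply He. lia. apply Hdel. exact Hy.
    intros t. reflexivity.
  - apply Hc. lia. exact Hx.
  - apply Hc. lia. exact Hx.
  - apply Hc. lia. exact Hx.
Qed.

Lemma cont_pair {T U V : UniformSpace} (f : T -> U) (g : T -> V) x :
  continuous f x -> continuous g x -> continuous (fun z => (f z, g z)) x.
Proof.
  intros Hf Hg.
  apply (continuous_comp_2 f g (fun a b => (a, b)) x Hf Hg).
  unfold continuous. eapply filterlim_ext. 2: apply filterlim_id.
  intros [a b]. reflexivity.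
Qed.

Lemma cR_plus (p : R * R) (f g : R * R -> R) : continuous f p -> continuous g p -> continuous (fun z => f z + g z) p.
Proof. intros. apply (continuous_plus f g). auto. auto. Qed.
Lemma cR_mult (p : R * R) (f g : R * R -> R) : continuous f p -> continuous g p -> continuous (fun z => f z * g z) p.
Proof. intros. apply (continuous_mult f g). auto. auto. Qed.
Lemma cR_opp (p : R * R) (f : R * R -> R) : continuous f p -> continuous (fun z => - f z) p.
Proof. intros. apply (continuous_opp f). auto. Qed.
Lemma cR_minus (p : R * R) (f g : R * R -> R) : continuous f p -> continuous g p -> continuous (fun z => f z - g z) p.
Proof. intros. apply (continuous_minus f g). auto. auto. Qed.
Lemma cR_const (p : R * R) (c : R) : continuous (fun _ : R * R => c) p.
Proof. apply continuous_const. Qed.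
Lemma cR_fst (p : R * R) : continuous (fun z => fst z) p.
Proof. destruct p. apply continuous_fst. Qed.
Lemma cR_snd (p : R * R) : continuous (fun z => snd z) p.
Proof. destruct p. apply continuous_snd. Qed.
Lemma cR_sin (p : R * R) (f : R * R -> R) : continuous f p -> continuous (fun z => sin (f z)) p.
Proof. intros H. apply (continuous_comp f sin). auto. apply continuous_sin. Qed.
Lemma cR_cos (p : R * R) (f : R * R -> R) : continuous f p -> continuous (fun z => cos (f z)) p.
Proof. intros H. apply (continuous_comp f cos). auto. apply continuous_cos. Qed.
Lemma cR_sph (p : R * R) (u : R3 -> R) : continuous u (sph (fst p) (snd p)) ->
  continuous (fun z => u (sph (fst z) (snd z))) p.
Proof.
  intros H. apply (continuous_comp (fun z => sph (fst z) (snd z)) u). 2: exact H.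
  unfold sph. apply cont_pair. apply cont_pair.
  - apply cR_mult. apply cR_sin, cR_fst. apply cR_cos, cR_snd.
  - apply cR_mult. apply cR_sin, cR_fst. apply cR_sin, cR_snd.
  - apply cR_cos, cR_fst.
Qed.

Ltac cRstep :=
  lazymatch goal with
  | |- continuous (fun z => @?f z + @?g z) _ => apply (cR_plus _ f g)
  | |- continuous (fun z => @?f z - @?g z) _ => apply (cR_minus _ f g)
  | |- continuous (fun z => @?f z * @?g z) _ => apply (cR_mult _ f g)
  | |- continuous (fun z => - @?f z) _ => apply (cR_opp _ f)
  | |- continuous (fun z => sin (@?f z)) _ => apply (cR_sin _ f)
  | |- continuous (fun z => cos (@?f z)) _ => apply (cR_cos _ f)
  | |- continuous (fun z => fst z) _ => apply cR_fst
  | |- continuous (fun z => snd z) _ => apply cR_snd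
  | |- continuous (fun z => ?u (sph (fst z) (snd z))) _ => apply (cR_sph _ u)
  | |- continuous (fun z => _) _ => apply cR_const
  end.
Ltac cR := repeat cRstep.

Lemma cont_slice (f : R -> R -> R) (t y : R) :
  continuous (fun z => f (fst z) (snd z)) (t, y) -> continuous (f t) y.
Proof.
  intros H. apply (continuous_comp (fun y => (t, y)) (fun z => f (fst z) (snd z))).
  apply cont_pair. apply continuous_const. apply continuous_id. exact H.
Qed.

Lemma ex_RInt_slice (f : R -> R -> R) (t c d : R) :
  (forall p, continuous (fun z => f (fst z) (snd z)) p) -> ex_RInt (f t) c d.
Proof.
  intros H. apply (ex_RInt_continuous (V := R_CompleteNormedModule)). intros y _. apply cont_slice. apply H.
Qed.

Lemma param_cont (f : R -> R -> R) (c d : R) :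
  c <= d -> (forall p, continuous (fun z => f (fst z) (snd z)) p) ->
  forall t, continuous (fun t => RInt (f t) c d) t.
Proof.
  intros Hcd Hf t.
  apply filterlim_locally. intros eps.
  assert (He : 0 < eps / (d - c + 1)).
  { apply Rdiv_lt_0_compat. apply cond_pos. lra. }
  destruct (uniform_continuity_2d f (t - 1) (t + 1) c d) with (eps := mkposreal _ He) as [del Hdel].
  { intros x y _ _. apply continuity_2d_pt_filterlim. apply Hf. }
  assert (Hm : 0 < Rmin del 1) by (apply Rmin_pos; [apply cond_pos | lra]).
  exists (mkposreal _ Hm). intros t' Ht'. simpl in Ht'.
  assert (Ht2 : Rabs (t' - t) < Rmin del 1) by (apply ballR; exact Ht'). clear Ht'. rename Ht2 into Ht'.
  apply ballR.
  pose proof (Rmin_l del 1). pose proof (Rmin_r del 1).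
  change (RInt (f t') c d - RInt (f t) c d) with (minus (RInt (f t') c d) (RInt (f t) c d)).
  rewrite <- RInt_minus by (apply ex_RInt_slice; exact Hf).
  eapply Rle_lt_trans.
  apply (abs_RInt_le_const (fun x => minus (f t' x) (f t x)) c d (eps / (d - c + 1))).
  - exact Hcd.
  - apply (ex_RInt_minus (V := R_NormedModule)); apply ex_RInt_slice; exact Hf.
  - intros y Hy. left. unfold minus, plus, opp; simpl.
    apply (Hdel t y t' y); try lra.
    all: try (apply Rabs_def2 in Ht'; split; lra).
    all: try (replace (y - y) with 0 by ring; rewrite Rabs_R0; apply cond_pos).
    assert (0 < eps) by apply cond_pos.
    replace ((d - c) * (eps / (d - c + 1))) with (eps * ((d - c) / (d - c + 1))) by (field; lra).
    assert ((d - c) / (d - c + 1) < 1).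
    { apply Rmult_lt_reg_r with (d - c + 1). lra. unfold Rdiv. rewrite Rmult_assoc, Rinv_l by lra. lra. }
    nra.
Qed.

Lemma dH_abs (G0 G1 G2 : R -> R) (D0 D1 D2 th cp sp : R) :
  is_derive G0 th D0 -> is_derive G1 th D1 -> is_derive G2 th D2 ->
  is_derive (fun t => sin t * (cos t * cp * G0 t + cos t * sp * G1 t - sin t * G2 t)) th
   (cos th * (cos th * cp * G0 th + cos th * sp * G1 th - sin th * G2 th) +
    sin th * (- sin th * cp * G0 th - sin th * sp * G1 th - cos th * G2 th
              + cos th * cp * D0 + cos th * sp * D1 - sin th * D2)).
Proof.
  intros H0 H1 H2.
  auto_derive.
  - repeat split; eexists; eassumption.
  - replace (Derive (fun x => G0 x) th) with D0 by (symmetry; apply is_derive_unique; exact H0).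
    replace (Derive (fun x => G1 x) th) with D1 by (symmetry; apply is_derive_unique; exact H1).
    replace (Derive (fun x => G2 x) th) with D2 by (symmetry; apply is_derive_unique; exact H2). ring.
Qed.

Lemma dF_abs (G0 G1 : R -> R) (D0 D1 s ph : R) :
  is_derive G0 ph D0 -> is_derive G1 ph D1 ->
  is_derive (fun t => - (s * sin t) * G0 t + s * cos t * G1 t) ph
   (- (s * cos ph) * G0 ph - s * sin ph * D0 - s * sin ph * G1 ph + s * cos ph * D1).
Proof.
  intros H0 H1.
  auto_derive.
  - repeat split; eexists; eassumption.
  - replace (Derive (fun x => G0 x) ph) with D0 by (symmetry; apply is_derive_unique; exact H0).
    replace (Derive (fun x => G1 x) ph) with D1 by (symmetry; apply is_derive_unique; exact H1). ring.
Qed.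

Definition SR (h : R3 -> R) : R :=
  RInt (fun th => RInt (fun ph => sin th * h (sph th ph)) 0 (2 * PI)) 0 PI.

Definition GS (v : R3 -> R) (w : R3) : R :=
  pR (pR v 0) 0 w + pR (pR v 1) 1 w + pR (pR v 2) 2 w
  - (coord w 0 * coord w 0 * pR (pR v 0) 0 w + coord w 0 * coord w 1 * pR (pR v 1) 0 w
     + coord w 0 * coord w 2 * pR (pR v 2) 0 w
   + coord w 1 * coord w 0 * pR (pR v 0) 1 w + coord w 1 * coord w 1 * pR (pR v 1) 1 w
     + coord w 1 * coord w 2 * pR (pR v 2) 1 w
   + coord w 2 * coord w 0 * pR (pR v 0) 2 w + coord w 2 * coord w 1 * pR (pR v 1) 2 w
     + coord w 2 * coord w 2 * pR (pR v 2) 2 w)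
  - 2 * (coord w 0 * pR v 0 w + coord w 1 * pR v 1 w + coord w 2 * pR v 2 w).

Definition Reg (U : R3 -> Prop) (v : R3 -> R) : Prop :=
  open U /\ (forall th ph, U (sph th ph)) /\
  (forall j x, (j < 3)%nat -> U x -> continuous (pR v j) x) /\
  (forall j, (j < 3)%nat -> D1 U (pR v j)).

Definition gg v j th ph := pR v j (sph th ph).
Definition hh v j k th ph := pR (pR v j) k (sph th ph).

Definition Dth v j th ph :=
  cos th * cos ph * hh v j 0 th ph + cos th * sin ph * hh v j 1 th ph + - sin th * hh v j 2 th ph.
Definition Dph v j th ph :=
  - (sin th * sin ph) * hh v j 0 th ph + sin th * cos ph * hh v j 1 th ph + 0 * hh v j 2 th ph.
Definition Ft v th ph :=
  cos th * cos ph * gg v 0 th ph + cos th * sin ph * gg v 1 th ph - sin th * gg v 2 th ph.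
Definition Hf v th ph := sin th * Ft v th ph.
Definition dH v th ph :=
  cos th * Ft v th ph +
    sin th * (- sin th * cos ph * gg v 0 th ph - sin th * sin ph * gg v 1 th ph - cos th * gg v 2 th ph
              + cos th * cos ph * Dth v 0 th ph + cos th * sin ph * Dth v 1 th ph - sin th * Dth v 2 th ph).
Definition Fp v th ph := - (sin th * sin ph) * gg v 0 th ph + sin th * cos ph * gg v 1 th ph.
Definition dFp v th ph :=
  - (sin th * cos ph) * gg v 0 th ph - sin th * sin ph * Dph v 0 th ph
  - sin th * sin ph * gg v 1 th ph + sin th * cos ph * Dph v 1 th ph.

Lemma dth_g U v (HR : Reg U v) j (Hj : (j < 3)%nat) th ph :
  is_derive (fun t => gg v j t ph) th (Dth v j th ph).
Proof.
  destruct HR as [HU [Hs [HC HD]]].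
  unfold gg, Dth, hh, sph.
  apply (chainU U (pR v j) (fun t => sin t * cos ph) (fun t => sin t * sin ph) cos th).
  - exact HU.
  - apply HD, Hj.
  - apply Hs.
  - auto_derive; auto; ring.
  - auto_derive; auto; ring.
  - auto_derive; auto; ring.
Qed.

Lemma dph_g U v (HR : Reg U v) j (Hj : (j < 3)%nat) th ph :
  is_derive (fun t => gg v j th t) ph (Dph v j th ph).
Proof.
  destruct HR as [HU [Hs [HC HD]]].
  unfold gg, Dph, hh, sph.
  apply (chainU U (pR v j) (fun t => sin th * cos t) (fun t => sin th * sin t) (fun _ => cos th) ph).
  - exact HU.
  - apply HD, Hj.
  - apply Hs.
  - auto_derive; auto; ring.
  - auto_derive; auto; ring.
  - auto_derive; auto; ring.
Qed.

Lemma dH_ok U v (HR : Reg U v) th ph : is_derive (fun t => Hf v t ph) th (dH v th ph).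
Proof.
  unfold Hf, Ft, dH.
  apply (dH_abs (fun t => gg v 0 t ph) (fun t => gg v 1 t ph) (fun t => gg v 2 t ph));
  apply (dth_g U v HR); lia.
Qed.

Lemma dFp_ok U v (HR : Reg U v) th ph : is_derive (fun t => Fp v th t) ph (dFp v th ph).
Proof.
  unfold Fp, dFp.
  apply (dF_abs (fun t => gg v 0 th t) (fun t => gg v 1 th t));
  apply (dph_g U v HR); lia.
Qed.

Lemma GS_ident v th ph :
  sin th * (sin th * GS v (sph th ph)) = sin th * dH v th ph + dFp v th ph.
Proof.
  unfold GS, dH, dFp, Ft, Dth, Dph, gg, hh. simpl coord.
  pose proof (sin2_cos2 th) as E1. pose proof (sin2_cos2 ph) as E2.
  unfold Rsqr in E1, E2.
  generalize (pR v 0 (sph th ph)) (pR v 1 (sph th ph)) (pR v 2 (sph th ph)).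
  generalize (pR (pR v 0) 0 (sph th ph)) (pR (pR v 0) 1 (sph th ph)) (pR (pR v 0) 2 (sph th ph)).
  generalize (pR (pR v 1) 0 (sph th ph)) (pR (pR v 1) 1 (sph th ph)) (pR (pR v 1) 2 (sph th ph)).
  generalize (pR (pR v 2) 0 (sph th ph)) (pR (pR v 2) 1 (sph th ph)) (pR (pR v 2) 2 (sph th ph)).
  revert E1 E2. generalize (sin th) (cos th) (sin ph) (cos ph).
  intros. nsatz.
Qed.

Definition SC (h : R3 -> R) := forall p, continuous (fun z : R * R => h (sph (fst z) (snd z))) p.

Lemma Reg_g U v : Reg U v -> forall j th ph, (j < 3)%nat -> continuous (pR v j) (sph th ph).
Proof. intros [HU [Hs [HC HD]]] j th ph Hj. apply HC. exact Hj. apply Hs. Qed.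
Lemma Reg_h U v : Reg U v -> forall j k th ph, (j < 3)%nat -> (k < 3)%nat ->
  continuous (pR (pR v j) k) (sph th ph).
Proof. intros [HU [Hs [HC HD]]] j k th ph Hj Hk. apply (proj2 (HD j Hj)). exact Hk. apply Hs. Qed.

Ltac leaf HR := lazymatch goal with
  | |- continuous (pR (pR _ ?j) ?k) (sph ?a ?b) => exact (Reg_h _ _ HR j k a b ltac:(lia) ltac:(lia))
  | |- continuous (pR _ ?j) (sph ?a ?b) => exact (Reg_g _ _ HR j a b ltac:(lia))
  end.
Ltac cRR HR := cR; try leaf HR.

Lemma cj_dH U v (HR : Reg U v) p : continuous (fun z => dH v (fst z) (snd z)) p.
Proof. unfold dH, Ft, Dth, gg, hh. cRR HR. Qed.
Lemma cj_dFp U v (HR : Reg U v) p : continuous (fun z => dFp v (fst z) (snd z)) p.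
Proof. unfold dFp, Dph, gg, hh. cRR HR. Qed.
Lemma cj_Hf U v (HR : Reg U v) p : continuous (fun z => Hf v (fst z) (snd z)) p.
Proof. unfold Hf, Ft, gg. cRR HR. Qed.
Lemma SC_GS U v (HR : Reg U v) : SC (GS v).
Proof. intros p. unfold GS. simpl coord. cRR HR. Qed.

Lemma twoPI_pos : 0 <= 2 * PI.
Proof. pose proof PI_RGT_0. lra. Qed.

Lemma SC_inner (h : R3 -> R) : SC h ->
  forall p, continuous (fun z : R * R => sin (fst z) * h (sph (fst z) (snd z))) p.
Proof. intros H p. apply cR_mult. apply cR_sin, cR_fst. apply H. Qed.

Lemma SR_lin (h1 h2 : R3 -> R) (c : R) : SC h1 -> SC h2 ->
  SR (fun w => h1 w - c * h2 w) = SR h1 - c * SR h2.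
Proof.
  intros H1 H2. unfold SR.
  pose proof (SC_inner h1 H1) as K1. pose proof (SC_inner h2 H2) as K2.
  transitivity (RInt (fun th => minus (RInt (fun ph => sin th * h1 (sph th ph)) 0 (2 * PI))
                   (scal c (RInt (fun ph => sin th * h2 (sph th ph)) 0 (2 * PI)))) 0 PI).
  { apply RInt_ext. intros th _.
    rewrite <- (RInt_scal (V := R_CompleteNormedModule)) by
      (apply (ex_RInt_slice (fun a b => sin a * h2 (sph a b))); exact K2).
    rewrite <- RInt_minus.
    - apply RInt_ext. intros ph _. unfold minus, plus, opp, scal; simpl. unfold mult; simpl. ring.
    - apply (ex_RInt_slice (fun a b => sin a * h1 (sph a b))); exact K1.
    - apply (ex_RInt_scal (V := R_NormedModule)).
      apply (ex_RInt_slice (fun a b => sin a * h2 (sph a b))); exact K2. }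
  assert (E1 : ex_RInt (fun th => RInt (fun ph => sin th * h1 (sph th ph)) 0 (2 * PI)) 0 PI).
  { apply (ex_RInt_continuous (V := R_CompleteNormedModule)). intros z _.
    apply (param_cont (fun a b => sin a * h1 (sph a b))). apply twoPI_pos. exact K1. }
  assert (E2 : ex_RInt (fun th => RInt (fun ph => sin th * h2 (sph th ph)) 0 (2 * PI)) 0 PI).
  { apply (ex_RInt_continuous (V := R_CompleteNormedModule)). intros z _.
    apply (param_cont (fun a b => sin a * h2 (sph a b))). apply twoPI_pos. exact K2. }
  assert (E3 : ex_RInt (fun th => scal c (RInt (fun ph => sin th * h2 (sph th ph)) 0 (2 * PI))) 0 PI).
  { apply (ex_RInt_scal (V := R_NormedModule)). exact E2. }
  rewrite (RInt_minus (V := R_CompleteNormedModule)) by assumption.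
  rewrite (RInt_scal (V := R_CompleteNormedModule)) by assumption.
  unfold minus, plus, opp, scal; simpl. unfold mult; simpl. ring.
Qed.

Lemma Fp_per v th : Fp v th (2 * PI) = Fp v th 0.
Proof.
  unfold Fp, gg, sph. rewrite sin_2PI, cos_2PI, sin_0, cos_0. reflexivity.
Qed.

Lemma int_dFp U v (HR : Reg U v) th : RInt (dFp v th) 0 (2 * PI) = 0.
Proof.
  rewrite (is_RInt_unique _ _ _ _ (is_RInt_derive (fun t => Fp v th t) (dFp v th) 0 (2 * PI)
    (fun x _ => dFp_ok U v HR th x)
    (fun x _ => cont_slice (dFp v) th x (cj_dFp U v HR (th, x))))).
  rewrite Fp_per. unfold minus, plus, opp; simpl. ring.
Qed.

Lemma Hf_end v th : sin th = 0 -> RInt (Hf v th) 0 (2 * PI) = 0.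
Proof.
  intros Hs. unfold Hf. rewrite Hs.
  rewrite (RInt_ext _ (fun _ => 0)). 2:{ intros. apply Rmult_0_l. }
  rewrite RInt_const. unfold scal; simpl; unfold mult; simpl. ring.
Qed.

Theorem SR_GS U v (HR : Reg U v) : SR (GS v) = 0.
Proof.
  unfold SR.
  pose proof PI_RGT_0 as Hpi.
  transitivity (RInt (fun th => RInt (dH v th) 0 (2 * PI)) 0 PI).
  { apply RInt_ext. intros th Hth.
    rewrite Rmin_left, Rmax_right in Hth by lra.
    assert (Hs : 0 < sin th) by (apply sin_gt_0; lra).
    transitivity (RInt (fun ph => plus (dH v th ph) (scal (/ sin th) (dFp v th ph))) 0 (2 * PI)).
    { apply RInt_ext. intros ph _. unfold plus, scal; simpl; unfold mult; simpl.
      apply Rmult_eq_reg_l with (sin th); [| lra]. rewrite GS_ident. field. lra. }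
    rewrite (RInt_plus (V := R_CompleteNormedModule)).
    - rewrite (RInt_scal (V := R_CompleteNormedModule)).
      + rewrite (int_dFp U v HR). unfold plus, scal; simpl; unfold mult; simpl. ring.
      + apply (ex_RInt_slice (dFp v)). apply (cj_dFp U v HR).
    - apply (ex_RInt_slice (dH v)). apply (cj_dH U v HR).
    - apply (ex_RInt_scal (V := R_NormedModule)). apply (ex_RInt_slice (dFp v)). apply (cj_dFp U v HR). }
  assert (Hder : forall th : R, is_derive (fun t => RInt (Hf v t) 0 (2 * PI)) th (RInt (dH v th) 0 (2 * PI))).
  { intros th.
    assert (Eq : (fun u w => Derive (fun z => Hf v z w) u) = dH v).
    { apply functional_extensionality; intros u. apply functional_extensionality; intros w.
      apply is_derive_unique. apply (dH_ok U v HR). }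
    pose proof (is_derive_RInt_param (Hf v) 0 (2 * PI) th) as P.
    rewrite Eq in P.
    replace (RInt (dH v th) 0 (2 * PI)) with (RInt (fun t => Derive (fun u => Hf v u t) th) 0 (2 * PI)).
    2:{ apply RInt_ext. intros t _. apply is_derive_unique. apply (dH_ok U v HR). }
    apply P.
    - apply filter_forall. intros y t _. eexists. apply (dH_ok U v HR).
    - intros t _. apply continuity_2d_pt_filterlim.
      pose proof (cj_dH U v HR (th, t)) as CC. unfold continuous in CC. exact CC.
    - apply filter_forall. intros y. apply (ex_RInt_slice (Hf v)). apply (cj_Hf U v HR). }
  rewrite (is_RInt_unique _ _ _ _ (is_RInt_derive (fun t => RInt (Hf v t) 0 (2 * PI))
     (fun th => RInt (dH v th) 0 (2 * PI)) 0 PI (fun x _ => Hder x)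
     (fun x _ => param_cont (dH v) 0 (2 * PI) twoPI_pos (cj_dH U v HR) x))).
  rewrite !Hf_end by (apply sin_PI || apply sin_0).
  unfold minus, plus, opp; simpl. ring.
Qed.

Definition projOK (proj : C -> R) : Prop :=
  (forall a b, proj (Cplus a b) = proj a + proj b) /\
  (forall a, proj (Copp a) = - proj a) /\
  (forall r z, proj (Cmult (RtoC r) z) = r * proj z) /\
  (forall f j x, proj (partial f j x) = Derive (fun t => proj (f (shift x j t))) 0) /\
  (forall f j x, ex_partial f j x -> ex_derive (fun t => proj (f (shift x j t))) 0) /\
  (forall (f : R3 -> C) x, continuous f x -> continuous (fun y => proj (f y)) x).

Lemma projOK_Re : projOK Re.
Proof.
  repeat split.
  - intros r z. unfold Re, Cmult, RtoC; simpl. ring.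
  - intros f j x [H _]. exact H.
  - intros f x H. apply (continuous_comp f (fun z : C => fst z)). exact H.
    destruct (f x) as [a b]. apply (continuous_fst (U := R_UniformSpace) (V := R_UniformSpace) a b).
Qed.

Lemma projOK_Im : projOK Im.
Proof.
  repeat split.
  - intros r z. unfold Im, Cmult, RtoC; simpl. ring.
  - intros f j x [_ H]. exact H.
  - intros f x H. apply (continuous_comp f (fun z : C => snd z)). exact H.
    destruct (f x) as [a b]. apply (continuous_snd (U := R_UniformSpace) (V := R_UniformSpace) a b).
Qed.

Lemma pR_proj proj (HP : projOK proj) (f : R3 -> C) j :
  pR (fun y => proj (f y)) j = fun x => proj (partial f j x).
Proof.
  apply functional_extensionality. intros x. unfold pR.
  destruct HP as [_ [_ [_ [Hp _]]]]. rewrite Hp. reflexivity.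
Qed.

Lemma cball_sph th ph : cball (sph th ph).
Proof.
  unfold cball, sph; simpl.
  pose proof (sin2_cos2 th) as E1. pose proof (sin2_cos2 ph) as E2. unfold Rsqr in E1, E2.
  right.
  replace ((sin th * cos ph) * ((sin th * cos ph) * 1) + (sin th * sin ph) * ((sin th * sin ph) * 1) + cos th * (cos th * 1))
    with (sin th * sin th * (sin ph * sin ph + cos ph * cos ph) + cos th * cos th) by ring.
  rewrite E2. lra.
Qed.

Lemma Reg_of proj (HP : projOK proj) (U : R3 -> Prop) (u1 : R3 -> C) :
  open U -> (forall x, cball x -> U x) -> Ck 3 U u1 -> Reg U (fun y => proj (u1 y)).
Proof.
  intros HU Hb [_ [He1 Hk]].
  pose proof HP as [_ [_ [_ [_ [Hex Hcont]]]]].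
  split; [exact HU|]. split; [intros; apply Hb, cball_sph|]. split.
  - intros j x Hj Hx. rewrite (pR_proj proj HP). apply Hcont.
    destruct (Hk j Hj) as [C2 _]. apply C2, Hx.
  - intros j Hj. rewrite (pR_proj proj HP). destruct (Hk j Hj) as [_ [E2 Hk2]]. split.
    + intros k x Hk' Hx. apply Hex. apply E2. exact Hk'. exact Hx.
    + intros k x Hk' Hx. rewrite (pR_proj proj HP (partial u1 j)). apply Hcont.
      destruct (Hk2 k Hk') as [C3 _]. apply C3, Hx.
Qed.

Definition ee (j k : nat) : R := if Nat.eqb j k then 1 else 0.

Lemma coord_shift w j k t : (j < 3)%nat -> (k < 3)%nat ->
  coord (shift w j t) k = coord w k + ee j k * t.
Proof.
  intros Hj Hk. destruct w as [[w0 w1] w2]. unfold ee.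
  destruct j as [|[|[|j]]]; try lia; destruct k as [|[|[|k]]]; try lia; simpl; ring.
Qed.

Lemma shift0 w j : shift w j 0 = w.
Proof.
  destruct w as [[w0 w1] w2]. destruct j as [|[|j]]; simpl; rewrite Rplus_0_r; reflexivity.
Qed.

Lemma dL1_abs (c0 c1 c2 e0 e1 e2 a : R) (P0 P1 P2 B C0 : R -> R) dP0 dP1 dP2 dB dC :
  is_derive P0 0 dP0 -> is_derive P1 0 dP1 -> is_derive P2 0 dP2 ->
  is_derive B 0 dB -> is_derive C0 0 dC ->
  Derive (fun t => - ((c0 + e0 * t) * P0 t + (c1 + e1 * t) * P1 t + (c2 + e2 * t) * P2 t)
            - a * B t + C0 t) 0
  = - ((e0 * P0 0 + c0 * dP0) + (e1 * P1 0 + c1 * dP1) + (e2 * P2 0 + c2 * dP2)) - a * dB + dC.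
Proof.
  intros H0 H1 H2 HB HC. apply is_derive_unique.
  auto_derive.
  - repeat split; eexists; eassumption.
  - replace (Derive (fun x => P0 x) 0) with dP0 by (symmetry; apply is_derive_unique; exact H0).
    replace (Derive (fun x => P1 x) 0) with dP1 by (symmetry; apply is_derive_unique; exact H1).
    replace (Derive (fun x => P2 x) 0) with dP2 by (symmetry; apply is_derive_unique; exact H2).
    replace (Derive (fun x => B x) 0) with dB by (symmetry; apply is_derive_unique; exact HB).
    replace (Derive (fun x => C0 x) 0) with dC by (symmetry; apply is_derive_unique; exact HC).
    ring.
Qed.

Lemma proj_partial proj (HP : projOK proj) f j x :
  proj (partial f j x) = pR (fun y => proj (f y)) j x.
Proof. rewrite (pR_proj proj HP). reflexivity. Qed.

Lemma isd_proj proj (HP : projOK proj) f j x :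
  ex_partial f j x -> is_derive (fun t => proj (f (shift x j t))) 0 (proj (partial f j x)).
Proof.
  intros H. pose proof HP as [_ [_ [_ [Hp [Hex _]]]]].
  rewrite Hp. apply Derive_correct. apply Hex. exact H.
Qed.

Lemma partial_L1 proj (HP : projOK proj) p u1 u2 w j : (j < 3)%nat ->
  (forall k, (k < 3)%nat -> ex_partial (partial u1 k) j w) ->
  ex_partial u1 j w -> ex_partial u2 j w ->
  proj (partial (fst (Ltilde p (u1, u2))) j w) =
  - ((ee j 0 * proj (partial u1 0 w) + coord w 0 * proj (partial (partial u1 0) j w))
   + (ee j 1 * proj (partial u1 1 w) + coord w 1 * proj (partial (partial u1 1) j w))
   + (ee j 2 * proj (partial u1 2 w) + coord w 2 * proj (partial (partial u1 2) j w)))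
  - 2 / (p - 1) * proj (partial u1 j w) + proj (partial u2 j w).
Proof.
  intros Hj H2 H1 Hu2.
  pose proof HP as [Hadd [Hopp [Hmul [Hp _]]]].
  rewrite Hp.
  rewrite (Derive_ext _ (fun t =>
     - ((coord w 0 + ee j 0 * t) * proj (partial u1 0 (shift w j t))
      + (coord w 1 + ee j 1 * t) * proj (partial u1 1 (shift w j t))
      + (coord w 2 + ee j 2 * t) * proj (partial u1 2 (shift w j t)))
     - 2 / (p - 1) * proj (u1 (shift w j t)) + proj (u2 (shift w j t)))).
  2:{ intros t. unfold Ltilde, sum3, Cminus. simpl fst.
      rewrite !Hadd, !Hopp, !Hadd, !Hmul.
      change (fst (fst (shift w j t))) with (coord (shift w j t) 0).
      change (snd (fst (shift w j t))) with (coord (shift w j t) 1).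
      change (snd (shift w j t)) with (coord (shift w j t) 2).
      rewrite !coord_shift by lia. ring. }
  rewrite (dL1_abs _ _ _ _ _ _ _ _ _ _ _ _ _ _ _ _ _
     (isd_proj proj HP _ _ _ (H2 0%nat ltac:(lia)))
     (isd_proj proj HP _ _ _ (H2 1%nat ltac:(lia)))
     (isd_proj proj HP _ _ _ (H2 2%nat ltac:(lia)))
     (isd_proj proj HP _ _ _ H1)
     (isd_proj proj HP _ _ _ Hu2)).
  rewrite !shift0. ring.
Qed.

Lemma bdry_pt proj (HP : projOK proj) p (hp : p - 1 <> 0) u1 u2 w :
  (forall j, (j < 3)%nat -> ex_partial u1 j w) ->
  (forall j k, (j < 3)%nat -> (k < 3)%nat -> ex_partial (partial u1 k) j w) ->
  (forall j, (j < 3)%nat -> ex_partial u2 j w) ->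
  proj (bdry (Ltilde p (u1, u2)) w) =
  GS (fun y => proj (u1 y)) w - 2 / (p - 1) * proj (bdry (u1, u2) w).
Proof.
  intros H1 H2 H3.
  pose proof HP as [Hadd [Hopp [Hmul _]]].
  unfold bdry, sum3.
  rewrite !Hadd, !Hmul.
  rewrite (partial_L1 proj HP p u1 u2 w 0) by (auto; lia).
  rewrite (partial_L1 proj HP p u1 u2 w 1) by (auto; lia).
  rewrite (partial_L1 proj HP p u1 u2 w 2) by (auto; lia).
  unfold Ltilde. cbn [fst snd].
  unfold sum3, Cminus. rewrite !Hadd, !Hopp, !Hmul.
  unfold GS. rewrite !(pR_proj proj HP). cbv beta.
  cbn [ee Nat.eqb].
  rewrite !Hadd, !Hmul. field. exact hp.
Qed.

Lemma RInt_pair (f : R -> C) a b :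
  ex_RInt (fun t => fst (f t)) a b -> ex_RInt (fun t => snd (f t)) a b ->
  RInt (V := C_R_CompleteNormedModule) f a b = (RInt (fun t => fst (f t)) a b, RInt (fun t => snd (f t)) a b).
Proof.
  intros H1 H2. symmetry.
  apply (RInt_fct_extend_pair (@RInt R_CompleteNormedModule) (@RInt R_CompleteNormedModule)).
  intros; apply is_RInt_unique; auto.
  intros; apply is_RInt_unique; auto.
  apply (RInt_correct (V := C_R_CompleteNormedModule)).
  apply (ex_RInt_fct_extend_pair f a b H1 H2).
Qed.

Lemma cont_combo (h k : R3 -> R) p : SC h -> SC k ->
  continuous (fun z : R * R => sin (fst z) * h (sph (fst z) (snd z)) - 0 * k (sph (fst z) (snd z))) p.
Proof.
  intros Hh Hk. apply cR_minus. apply cR_mult. apply cR_sin, cR_fst. apply Hh.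
  apply cR_mult. apply cR_const. apply Hk.
Qed.
Lemma cont_combo2 (h k : R3 -> R) p : SC h -> SC k ->
  continuous (fun z : R * R => sin (fst z) * h (sph (fst z) (snd z)) + 0 * k (sph (fst z) (snd z))) p.
Proof.
  intros Hh Hk. apply cR_plus. apply cR_mult. apply cR_sin, cR_fst. apply Hh.
  apply cR_mult. apply cR_const. apply Hk.
Qed.

Lemma sphere_split (g : R3 -> C) :
  SC (fun w => Re (g w)) -> SC (fun w => Im (g w)) ->
  sphere_int g = (SR (fun w => Re (g w)), SR (fun w => Im (g w))).
Proof.
  intros Hr Hi. unfold sphere_int, SR.
  rewrite (RInt_ext (V := C_R_CompleteNormedModule) _
    (fun th => (RInt (fun ph => sin th * Re (g (sph th ph))) 0 (2 * PI),
                RInt (fun ph => sin th * Im (g (sph th ph))) 0 (2 * PI)))).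
  2:{ intros th _.
      rewrite RInt_pair.
      - f_equal; apply RInt_ext; intros ph _; unfold Cmult, RtoC, Re, Im; simpl; ring.
      - apply (ex_RInt_slice (fun a b => sin a * Re (g (sph a b)) - 0 * Im (g (sph a b)))).
        intros p. apply (cont_combo (fun w => Re (g w)) (fun w => Im (g w))); assumption.
      - apply (ex_RInt_slice (fun a b => sin a * Im (g (sph a b)) + 0 * Re (g (sph a b)))).
        intros p. apply (cont_combo2 (fun w => Im (g w)) (fun w => Re (g w))); assumption. }
  rewrite RInt_pair; simpl; [reflexivity| |].
  - apply (ex_RInt_continuous (V := R_CompleteNormedModule)). intros z _.
    apply (param_cont (fun a b => sin a * Re (g (sph a b)))). apply twoPI_pos.
    apply (SC_inner (fun w => Re (g w))). exact Hr.
  - apply (ex_RInt_continuous (V := R_CompleteNormedModule)). intros z _.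
    apply (param_cont (fun a b => sin a * Im (g (sph a b)))). apply twoPI_pos.
    apply (SC_inner (fun w => Im (g w))). exact Hi.
Qed.

Lemma sphere_ext (g1 g2 : R3 -> C) :
  (forall th ph, g1 (sph th ph) = g2 (sph th ph)) -> sphere_int g1 = sphere_int g2.
Proof.
  intros H. unfold sphere_int. f_equal. apply functional_extensionality. intros th.
  f_equal. apply functional_extensionality. intros ph. rewrite H. reflexivity.
Qed.

Lemma SC_lin5 (f0 f1 f2 f3 f4 : R3 -> R) :
  (forall th ph, continuous f0 (sph th ph)) -> (forall th ph, continuous f1 (sph th ph)) ->
  (forall th ph, continuous f2 (sph th ph)) -> (forall th ph, continuous f3 (sph th ph)) ->
  (forall th ph, continuous f4 (sph th ph)) ->
  SC (fun w => coord w 0 * f0 w + coord w 1 * f1 w + coord w 2 * f2 w + f3 w + f4 w).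
Proof.
  intros H0 H1 H2 H3 H4 p. simpl coord. cR; auto.
Qed.

Lemma bdry_proj proj (HP : projOK proj) u1 u2 w :
  proj (bdry (u1, u2) w) = coord w 0 * proj (partial u1 0 w) + coord w 1 * proj (partial u1 1 w)
     + coord w 2 * proj (partial u1 2 w) + proj (u1 w) + proj (u2 w).
Proof.
  pose proof HP as [Hadd [Hopp [Hmul _]]].
  unfold bdry, sum3. cbn [fst snd]. rewrite !Hadd, !Hmul. reflexivity.
Qed.

Lemma SC_comb (h1 h2 : R3 -> R) c : SC h1 -> SC h2 -> SC (fun w => h1 w - c * h2 w).
Proof. intros H1 H2 p. apply cR_minus. apply H1. apply cR_mult. apply cR_const. apply H2. Qed.

Lemma main_proj proj (HP : projOK proj) p (hp1 : p - 1 <> 0) u1 u2 U1 U2 :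
  open U1 -> (forall x, cball x -> U1 x) -> Ck 3 U1 u1 ->
  (forall x, cball x -> U2 x) -> Ck 2 U2 u2 ->
  SC (fun w => proj (bdry (u1, u2) w)) /\
  SC (fun w => GS (fun y => proj (u1 y)) w - 2 / (p - 1) * proj (bdry (u1, u2) w)) /\
  SR (fun w => GS (fun y => proj (u1 y)) w - 2 / (p - 1) * proj (bdry (u1, u2) w))
    = - (2 / (p - 1)) * SR (fun w => proj (bdry (u1, u2) w)) /\
  (forall th ph, proj (bdry (Ltilde p (u1, u2)) (sph th ph)) =
     GS (fun y => proj (u1 y)) (sph th ph) - 2 / (p - 1) * proj (bdry (u1, u2) (sph th ph))).
Proof.
  intros HU1 Hb1 Hk1 Hb2 Hk2.
  pose proof (Reg_of proj HP U1 u1 HU1 Hb1 Hk1) as HR.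
  pose proof HP as [_ [_ [_ [_ [_ Hcont]]]]].
  destruct Hk1 as [Hc1 [He1 Hk1']].
  destruct Hk2 as [Hc2 [He2 _]].
  assert (SB : SC (fun w => proj (bdry (u1, u2) w))).
  { assert (E : (fun w => proj (bdry (u1, u2) w)) =
       (fun w => coord w 0 * proj (partial u1 0 w) + coord w 1 * proj (partial u1 1 w)
     + coord w 2 * proj (partial u1 2 w) + proj (u1 w) + proj (u2 w))).
    { apply functional_extensionality. intros w. apply bdry_proj. exact HP. }
    rewrite E.
    apply (SC_lin5 (fun w => proj (partial u1 0 w)) (fun w => proj (partial u1 1 w))
       (fun w => proj (partial u1 2 w)) (fun w => proj (u1 w)) (fun w => proj (u2 w)));
    intros th ph; apply Hcont.
    - destruct (Hk1' 0%nat ltac:(lia)) as [C _]. apply C, Hb1, cball_sph.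
    - destruct (Hk1' 1%nat ltac:(lia)) as [C _]. apply C, Hb1, cball_sph.
    - destruct (Hk1' 2%nat ltac:(lia)) as [C _]. apply C, Hb1, cball_sph.
    - apply Hc1, Hb1, cball_sph.
    - apply Hc2, Hb2, cball_sph. }
  split; [exact SB|]. split.
  { apply SC_comb. apply (SC_GS U1 _ HR). exact SB. }
  split.
  { rewrite SR_lin. rewrite (SR_GS U1 _ HR). ring. apply (SC_GS U1 _ HR). exact SB. }
  intros th ph. apply (bdry_pt proj HP p hp1).
  - intros j Hj. apply He1. exact Hj. apply Hb1, cball_sph.
  - intros j k Hj Hk. destruct (Hk1' k Hk) as [_ [E _]]. apply E. exact Hj. apply Hb1, cball_sph.
  - intros j Hj. apply He2. exact Hj. apply Hb2, cball_sph.
Qed.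

Theorem lemma3p2 (p : R) (hp : 3 < p) (u1 u2 : R3 -> C) :
  Ck_cball 3 u1 -> Ck_cball 2 u2 ->
  Re (ip3 (Ltilde p (u1, u2)) (u1, u2)) <= - (2 / (p - 1)) * Re (ip3 (u1, u2) (u1, u2)).
Proof.
  intros [U1 [HU1 [Hb1 Hk1]]] [U2 [HU2 [Hb2 Hk2]]].
  assert (hp1 : p - 1 <> 0) by lra.
  destruct (main_proj Re projOK_Re p hp1 u1 u2 U1 U2 HU1 Hb1 Hk1 Hb2 Hk2) as [SR1 [SG1 [EQ1 PT1]]].
  destruct (main_proj Im projOK_Im p hp1 u1 u2 U1 U2 HU1 Hb1 Hk1 Hb2 Hk2) as [SR2 [SG2 [EQ2 PT2]]].
  set (g' := fun w => (GS (fun y => Re (u1 y)) w - 2 / (p - 1) * Re (bdry (u1, u2) w),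
                       GS (fun y => Im (u1 y)) w - 2 / (p - 1) * Im (bdry (u1, u2) w)) : C).
  assert (EA : sphere_int (bdry (Ltilde p (u1, u2))) = sphere_int g').
  { apply sphere_ext. intros th ph.
    rewrite (surjective_pairing (bdry (Ltilde p (u1, u2)) (sph th ph))).
    unfold g'. f_equal. apply PT1. apply PT2. }
  assert (EA2 : sphere_int g' = (SR (fun w => Re (g' w)), SR (fun w => Im (g' w)))).
  { apply sphere_split. exact SG1. exact SG2. }
  assert (EB : sphere_int (bdry (u1, u2)) =
     (SR (fun w => Re (bdry (u1, u2) w)), SR (fun w => Im (bdry (u1, u2) w)))).
  { apply sphere_split. exact SR1. exact SR2. }
  unfold ip3. rewrite EA, EA2, EB.
  change (SR (fun w => Re (g' w))) with
    (SR (fun w => GS (fun y => Re (u1 y)) w - 2 / (p - 1) * Re (bdry (u1, u2) w))).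
  change (SR (fun w => Im (g' w))) with
    (SR (fun w => GS (fun y => Im (u1 y)) w - 2 / (p - 1) * Im (bdry (u1, u2) w))).
  rewrite EQ1, EQ2.
  unfold Re, Cmult, Cconj; simpl. right. ring.
Qed.
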